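(* Let $\mathcal G$ be an MMPG arena, let $(\sigma,\gamma)$ be an incentive strategy profile, and let $Q$ be the set of vertices occurring on $\pi_\sigma$. Then for every follower $p\in P\setminus\{l\}$ and every vertex $v\in Q\cap V_p$ we have $\gamma_p(\sigma)+r_p(\sigma)\ge \mathrm{val}_p(v)$.
   Context: A multi-player mean-payoff game (MMPG) arena is a tuple $\mathcal G=(P,V,(V_p)_{p\in P},v_0,E,(r_p)_{p\in P})$ where $P$ is a finite set of players containing a distinguished leader $l\in P$ (the other players are called followers), $V$ is a finite set of vertices with initial vertex $v_0\in V$, $(V_p)_{p\in P}$ is a partition of $V$ (player $p$ owns $V_p$), $E\subseteq V\times V$ is an edge set such that every vertex has at least one successor, and $r_p:E\to\mathbb Q$ is the reward function of player $p$. A history is a finite sequence $h=v_0v_1\dots v_n$ starting at $v_0$ with $(v_i,v_{i+1})\in E$ for all $i<n$; $\mathsf{last}(h)=v_n$. A play is an infinite such sequence. A strategy of player $p$ is a function $\sigma_p$ assigning to every history $h$ with $\mathsf{last}(h)\in V_p$ a vertex $v$ with $(\mathsf{last}(h),v)\in E$. A strategy profile $\sigma=(\sigma_p)_{p\in P}$ determines a unique play $\pi_\sigma$. The raw payoff of player $p$ on a play $\pi=v_0v_1\dots$ is $r_p(\pi)=\liminf_{n\to\infty}\frac1n\sum_{i=0}^{n-1}r_p((v_i,v_{i+1}))$, and $r_p(\sigma):=r_p(\pi_\sigma)$. For a profile $\sigma$, a player $p$ and a strategy $\sigma'$ of $p$, $\sigma_{p,\sigma'}$ denotes the profile obtained from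 $\sigma$ by replacing $p$'s strategy with $\sigma'$. An incentive for a follower $p$ is a function $\gamma_p$ from histories to $\mathbb R_{\ge 0}$; its value on a play $\pi=v_0v_1\dots$ is $\gamma_p(\pi)=\liminf_{n\to\infty}\frac1n\sum_{i=1}^{n}\gamma_p(v_0\dots v_i)$, and $\gamma_p(\sigma):=\gamma_p(\pi_\sigma)$. An incentive profile is $\gamma=(\gamma_p)_{p\in P\setminus\{l\}}$. A pair $(\sigma,\gamma)$ is an incentive strategy profile (ISP) if for every follower $p$ and every strategy $\sigma'$ of $p$: $r_p(\sigma)+\gamma_p(\sigma)\ge r_p(\sigma_{p,\sigma'})+\gamma_p(\sigma_{p,\sigma'})$. For a follower $p$, $\mathcal G_p$ is the two-player zero-sum mean-payoff game on the graph $(V,E)$ from any start vertex, in which player $p$ controls $V_p$ and maximises the liminf-average of $r_p$, while a coalition of all other players (including the leader) controls $V\setminus V_p$ and minimises it. Such games are determined with optimal memoryless strategies for both sides; $\mathrm{val}_p(v)$ denotes the value of $\mathcal G_p$ from vertex $v$. *)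

(* Defs.v *)
From HB Require Import structures.
From Stdlib Require Import Reals QArith Qreals ClassicalEpsilon.
From mathcomp Require Import all_boot.

Set Implicit Arguments.
Unset Strict Implicit.
Unset Printing Implicit Defensive.

Inductive Rbar : Type := Fin (r : R) | PInf | MInf.

Definition Rbar_le (x y : Rbar) : Prop :=
  match x, y with
  | MInf, _ => True
  | _, PInf => True
  | Fin a, Fin b => Rle a b
  | _, _ => False
  end.

(* PInf + MInf never occurs below (raw payoffs are finite); convention MInf. *)
Definition Rbar_plus (x y : Rbar) : Rbar :=
  match x, y with
  | Fin a, Fin b => Fin (Rplus a b)
  | MInf, _ => MInf
  | _, MInf => MInf
  | _, _ => PInf
  end.

Definition Rbar_is_lub (S : Rbar -> Prop) (l : Rbar) : Prop :=
  (forall y, S y -> Rbar_le y l) /\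
  (forall u, (forall y, S y -> Rbar_le y u) -> Rbar_le l u).

Definition Rbar_is_glb (S : Rbar -> Prop) (l : Rbar) : Prop :=
  (forall y, S y -> Rbar_le l y) /\
  (forall u, (forall y, S y -> Rbar_le u y) -> Rbar_le u l).

Definition Rbar_sup (S : Rbar -> Prop) : Rbar :=
  epsilon (inhabits MInf) (Rbar_is_lub S).
Definition Rbar_inf (S : Rbar -> Prop) : Rbar :=
  epsilon (inhabits MInf) (Rbar_is_glb S).

Definition liminf (u : nat -> R) : Rbar :=
  Rbar_sup (fun y => exists N : nat,
    y = Rbar_inf (fun z => exists k : nat, (N <= k)%N /\ z = Fin (u k))).

Fixpoint rsum (f : nat -> R) (n : nat) : R :=
  match n with
  | O => R0
  | S m => Rplus (rsum f m) (f m)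
  end.

Record arena : Type := Arena {
  player : finType;
  leader : player;
  vertex : finType;
  owner : vertex -> player;          (* v \in V_p  <->  owner v = p *)
  init : vertex;
  edge : rel vertex;
  edge_total : forall v, exists w, edge v w;
  reward : player -> vertex -> vertex -> Q  (* r_p, used on edges only *)
}.
Arguments leader : clear implicits.
Arguments owner : clear implicits.
Arguments init : clear implicits.
Arguments edge : clear implicits.
Arguments edge_total : clear implicits.
Arguments reward : clear implicits.

(* Histories are represented as sequences of vertices s :: rest with
   path (edge A) s rest. *)
Definition is_strategy_from (A : arena) (s : vertex A) (p : player A)
  (st : seq (vertex A) -> vertex A) : Prop :=
  forall rest, path (edge A) s rest -> owner A (last s rest) = p ->
    edge A (last s rest) (st (s :: rest)).

Definition is_coalition_strategy_from (A : arena) (s : vertex A) (p : player A)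
  (st : seq (vertex A) -> vertex A) : Prop :=
  forall rest, path (edge A) s rest -> owner A (last s rest) <> p ->
    edge A (last s rest) (st (s :: rest)).

Fixpoint hist (A : arena) (next : seq (vertex A) -> vertex A) (s : vertex A)
  (n : nat) : seq (vertex A) :=
  match n with
  | O => [:: s]
  | S m => let h := hist next s m in rcons h (next h)
  end.

Definition playv (A : arena) (next : seq (vertex A) -> vertex A) (s : vertex A)
  (n : nat) : vertex A := last s (hist next s n).

Definition mean_payoff (A : arena) (p : player A)
  (next : seq (vertex A) -> vertex A) (s : vertex A) : Rbar :=
  liminf (fun n => Rmult (Rinv (INR n)) (rsum (fun i =>
     Q2R (reward A p (playv next s i) (playv next s i.+1))) n)).

Definition profile (A : arena) := player A -> seq (vertex A) -> vertex A.

Definition is_profile (A : arena) (sigma : profile A) : Prop :=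
  forall p, is_strategy_from (init A) p (sigma p).

Definition profile_next (A : arena) (sigma : profile A)
  (h : seq (vertex A)) : vertex A :=
  sigma (owner A (last (init A) h)) h.

Definition play (A : arena) (sigma : profile A) (n : nat) : vertex A :=
  playv (profile_next sigma) (init A) n.

Definition deviate (A : arena) (sigma : profile A) (p : player A)
  (sigma' : seq (vertex A) -> vertex A) : profile A :=
  fun q => if q == p then sigma' else sigma q.

Definition raw_payoff (A : arena) (sigma : profile A) (p : player A) : Rbar :=
  mean_payoff p (profile_next sigma) (init A).

(* gamma p : histories -> R ; only the followers' components matter *)
Definition incentive_profile (A : arena) := player A -> seq (vertex A) -> R.

Definition is_incentive_profile (A : arena) (gamma : incentive_profile A) : Prop :=
  forall p, p != leader A -> forall h, Rle R0 (gamma p h).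

Definition incentive_value (A : arena) (gp : seq (vertex A) -> R)
  (sigma : profile A) : Rbar :=
  liminf (fun n => Rmult (Rinv (INR n))
     (rsum (fun i => gp (hist (profile_next sigma) (init A) i.+1)) n)).

Definition is_ISP (A : arena) (sigma : profile A) (gamma : incentive_profile A)
  : Prop :=
  is_profile sigma /\ is_incentive_profile gamma /\
  forall p, p != leader A ->
  forall sigma', is_strategy_from (init A) p sigma' ->
    Rbar_le
      (Rbar_plus (raw_payoff (deviate sigma p sigma') p)
                 (incentive_value (gamma p) (deviate sigma p sigma')))
      (Rbar_plus (raw_payoff sigma p) (incentive_value (gamma p) sigma)).

Definition gp_next (A : arena) (p : player A) (tau rho : seq (vertex A) -> vertex A)
  (s : vertex A) (h : seq (vertex A)) : vertex A :=
  if owner A (last s h) == p then tau h else rho h.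

(* val_p(v) = sup_tau inf_rho (payoff of p from v); by determinacy of
   mean-payoff games this is the value of G_p from v. *)
Definition game_val (A : arena) (p : player A) (v : vertex A) : Rbar :=
  Rbar_sup (fun y => exists tau, is_strategy_from v p tau /\
    y = Rbar_inf (fun z => exists rho, is_coalition_strategy_from v p rho /\
          z = mean_payoff p (gp_next p tau rho v) v)).

(* Main.v *)
Require Import Defs.
From HB Require Import structures.
From Stdlib Require Import Reals QArith Qreals ClassicalEpsilon.
From Stdlib Require Import Classical Lra Lia ZArith.
From mathcomp Require Import all_boot zify.

Section Helpers.
Local Open Scope R_scope.
Lemma Rbar_le_trans x y z : Rbar_le x y -> Rbar_le y z -> Rbar_le x z.
Proof. destruct x, y, z; simpl; intros; try tauto; lra. Qed.

Lemma Rbar_plus_comm x y : Rbar_plus x y = Rbar_plus y x.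
Proof. destruct x, y; simpl; auto. f_equal; ring. Qed.

Lemma Rbar_le_plus_nonneg x z : Rbar_le (Fin 0) z -> Rbar_le x (Rbar_plus x z).
Proof. destruct x, z; simpl; intros; try tauto; lra. Qed.

Lemma lub_ex (S : Rbar -> Prop) : exists l, Rbar_is_lub S l.
Proof.
destruct (classic (S PInf)) as [HP|HP].
  exists PInf; split; [intros y _; destruct y; simpl; auto|].
  intros u Hu; exact (Hu _ HP).
destruct (classic (exists r, S (Fin r))) as [[r0 Hr0]|HE].
  destruct (classic (exists M, forall r, S (Fin r) -> r <= M)) as [[M HM]|HB].
    destruct (completeness (fun r => S (Fin r))) as [m [Hm1 Hm2]].
      exists M; intros r Hr; exact (HM r Hr).
      exists r0; exact Hr0.
    exists (Fin m); split.
      intros y Hy; destruct y as [r| |]; simpl; try tauto; try exact (Hm1 r Hy); auto.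
    intros u Hu; destruct u as [b| |]; simpl; auto.
      apply Hm2; intros r Hr; exact (Hu _ Hr).
      exact (Hu _ Hr0).
  exists PInf; split; [intros y _; destruct y; simpl; auto|].
  intros u Hu; destruct u as [b| |]; simpl; auto.
    apply HB; exists b; intros r Hr; exact (Hu _ Hr).
    exact (Hu _ Hr0).
exists MInf; split.
  intros y Hy; destruct y as [r| |]; simpl; auto. apply HE; eauto.
intros u _; simpl; auto.
Qed.

Lemma glb_ex (S : Rbar -> Prop) : exists l, Rbar_is_glb S l.
Proof.
destruct (classic (S MInf)) as [HP|HP].
  exists MInf; split; [intros y _; destruct y; simpl; auto|].
  intros u Hu; exact (Hu _ HP).
destruct (classic (exists r, S (Fin r))) as [[r0 Hr0]|HE].
  destruct (classic (exists M, forall r, S (Fin r) -> M <= r)) as [[M HM]|HB].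
    destruct (completeness (fun b => forall r, S (Fin r) -> b <= r)) as [m [Hm1 Hm2]].
      exists r0; intros b Hb; exact (Hb _ Hr0).
      exists M; exact HM.
    exists (Fin m); split.
      intros y Hy; destruct y as [r| |]; simpl; auto; try tauto.
      apply Hm2; intros b Hb; exact (Hb _ Hy).
    intros u Hu; destruct u as [b| |]; simpl; auto.
      apply Hm1; intros r Hr; exact (Hu _ Hr).
      exact (Hu _ Hr0).
  exists MInf; split; [intros y _; destruct y; simpl; auto|].
  intros u Hu; destruct u as [b| |]; simpl; auto.
    apply HB; exists b; intros r Hr; exact (Hu _ Hr).
    exact (Hu _ Hr0).
exists PInf; split.
  intros y Hy; destruct y as [r| |]; simpl; auto. apply HE; eauto.
intros u _; destruct u; simpl; auto.
Qed.

Lemma sup_spec S : Rbar_is_lub S (Rbar_sup S).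
Proof. unfold Rbar_sup. apply epsilon_spec. apply lub_ex. Qed.
Lemma inf_spec S : Rbar_is_glb S (Rbar_inf S).
Proof. unfold Rbar_inf. apply epsilon_spec. apply glb_ex. Qed.

Definition infs (u : nat -> R) N :=
  Rbar_inf (fun z => exists k : nat, (N <= k)%N /\ z = Fin (u k)).

Lemma infs_le_liminf u N : Rbar_le (infs u N) (liminf u).
Proof. apply (proj1 (sup_spec _)). exists N; reflexivity. Qed.

Lemma liminf_ge0 u : (forall k, 0 <= u k) -> Rbar_le (Fin 0) (liminf u).
Proof.
intros H; apply Rbar_le_trans with (infs u 0); [|apply infs_le_liminf].
apply (proj2 (inf_spec _)). intros y [k [_ ->]]; simpl; auto.
Qed.

Lemma Fin_le_eps a x : (forall eps, 0 < eps -> Rbar_le (Fin (a - eps)) x) ->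
  Rbar_le (Fin a) x.
Proof.
destruct x as [b| |]; simpl; auto.
  intros H. destruct (Rle_dec a b) as [h|h]; auto.
  specialize (H ((a - b)/2)). lra.
intros H; apply (H 1); lra.
Qed.

Lemma liminf_mono_eps u w :
  (forall eps, 0 < eps -> exists N, forall k, (N <= k)%N -> u k <= w k + eps) ->
  Rbar_le (liminf u) (liminf w).
Proof.
intros H. apply (proj2 (sup_spec _)). intros y [N ->].
pose proof (proj1 (inf_spec (fun z => exists k : nat, (N <= k)%N /\ z = Fin (u k)))) as Hlb.
fold (infs u N) in Hlb. change (Rbar_le (infs u N) (liminf w)).
destruct (infs u N) as [a| |] eqn:E.
- apply Fin_le_eps. intros eps Heps. destruct (H eps Heps) as [N1 HN1].
  apply Rbar_le_trans with (infs w (maxn N N1)); [|apply infs_le_liminf].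
  apply (proj2 (inf_spec _)). intros y [k [Hk ->]]. simpl.
  assert (h1 : (N <= k)%N) by (apply: leq_trans Hk; apply leq_maxl).
  assert (h2 : (N1 <= k)%N) by (apply: leq_trans Hk; apply leq_maxr).
  specialize (Hlb (Fin (u k)) (ex_intro _ k (conj h1 erefl))). simpl in Hlb.
  specialize (HN1 k h2). lra.
- exfalso. exact (Hlb (Fin (u N)) (ex_intro _ N (conj (leqnn N) erefl))).
- simpl; auto.
Qed.
Lemma rsum_ext f g n : (forall i, g i = f i) -> rsum g n = rsum f n.
Proof. intros H; induction n as [|n IH]; simpl; auto. rewrite IH H; auto. Qed.

Lemma rsum_add h a b : rsum h (a + b) = rsum h a + rsum (fun i => h (a + i)%N) b.
Proof.
induction b as [|b IH]; simpl.
  rewrite addn0; ring.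
rewrite addnS /= IH; ring.
Qed.

Lemma rsum_bound h M n : (forall i, Rabs (h i) <= M) -> Rabs (rsum h n) <= INR n * M.
Proof.
intros H; induction n as [|n IH].
  simpl; rewrite Rabs_R0; lra.
change (rsum h n.+1) with (rsum h n + h n). rewrite S_INR. eapply Rle_trans; [apply Rabs_triang|]. specialize (H n). lra.
Qed.

Lemma rsum_ge0 h n : (forall i, 0 <= h i) -> 0 <= rsum h n.
Proof. intros H; induction n; simpl; [lra|]. specialize (H n); lra. Qed.

Lemma avg_ge0 h k : (forall i, 0 <= h i) -> 0 <= / INR k * rsum h k.
Proof.
intros H. destruct k as [|k].
  simpl; lra.
apply Rmult_le_pos; [|apply rsum_ge0; auto].
apply Rlt_le, Rinv_0_lt_compat, lt_0_INR; lia.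
Qed.

Lemma fin_bound (T : finType) (g : T -> R) : exists M, forall x, Rabs (g x) <= M.
Proof.
assert (H : forall s : seq T, exists M, forall x, x \in s -> Rabs (g x) <= M).
  elim=> [|y s [M HM]].
    exists 0; intros x; rewrite in_nil; discriminate.
  exists (Rmax (Rabs (g y)) M); intros x; rewrite in_cons; case/orP.
    move/eqP=> ->; apply Rmax_l.
  intros Hx; eapply Rle_trans; [apply HM; exact Hx| apply Rmax_r].
destruct (H (enum T)) as [M HM]; exists M; intros x; apply HM; rewrite mem_enum; auto.
Qed.

Lemma liminf_shift (f g : nat -> R) (n : nat) M :
  (forall i, Rabs (f i) <= M) -> (forall i, g i = f (n + i)%N) ->
  Rbar_le (liminf (fun k => / INR k * rsum g k)) (liminf (fun k => / INR k * rsum f k)).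
Proof.
intros HM Hg. apply liminf_mono_eps. intros eps Heps.
assert (HM0 : 0 <= M) by (specialize (HM 0%N); pose proof (Rabs_pos (f 0%N)); lra).
set C := 2 * INR n * M.
destruct (archimed (C / eps)) as [Ha _].
set N0 := Z.to_nat (up (C / eps)).
assert (HN0 : C / eps < INR N0).
  unfold N0. destruct (ZArith_dec.Z_lt_le_dec (up (C/eps)) 0) as [hz|hz].
    exfalso. assert (0 <= C / eps).
      unfold Rdiv; apply Rmult_le_pos; [unfold C; pose proof (pos_INR n); nra|].
      apply Rlt_le, Rinv_0_lt_compat; lra.
    apply IZR_lt in hz. lra.
  rewrite INR_IZR_INZ Z2Nat.id; auto.
exists (n + N0 + 1)%N. intros k Hk.
have [m Hm] : exists m, k = (n + m)%N by exists (k - n)%N; lia.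
assert (HmN : (N0 < m)%N) by lia.
subst k.
rewrite (rsum_ext (fun i => f (n + i)%N) g) //.
have Eg : rsum (fun i => f (n + i)%N) (n + m) = rsum (fun i => f (n + i)%N) m + rsum (fun i => f (n + (m + i))%N) n.
  by rewrite addnC rsum_add.
rewrite Eg rsum_add.
set X := rsum (fun i => f (n + i)%N) m.
set D1 := rsum _ n. set D2 := rsum f n.
assert (h1 : Rabs D1 <= INR n * M).
  apply rsum_bound; intros i; apply HM.
assert (h2 : Rabs D2 <= INR n * M) by (apply rsum_bound; auto).
assert (hk : 0 < INR (n + m)).
  apply lt_0_INR; lia.
assert (hk2 : INR N0 <= INR (n + m)) by (apply le_INR; lia).
assert (HC : C < eps * INR (n + m)).
  apply Rmult_lt_compat_r with (r := eps) in HN0; auto.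
  unfold Rdiv in HN0. rewrite Rmult_assoc Rinv_l in HN0; [|lra]. nra.
pose proof (Rle_abs D1) as a1; pose proof (Rle_abs (-D1)) as a2; pose proof (Rle_abs D2) as a3; pose proof (Rle_abs (-D2)) as a4; rewrite Rabs_Ropp in a2. rewrite Rabs_Ropp in a4.
  (* /k (X + D1) <= /k (D2 + X) + eps *)
assert (Hinv : 0 < / INR (n + m)) by (apply Rinv_0_lt_compat; auto).
assert (E : eps = / INR (n + m) * (eps * INR (n + m))).
  field; lra.
rewrite E. rewrite -Rmult_plus_distr_l. apply Rmult_le_compat_l; [lra|].
unfold C in HC. lra.
Qed.
End Helpers.
Lemma hist_head {A : arena} next (s : vertex A) j : exists r, hist next s j = s :: r.
Proof.
elim: j => [|j [r IH]] /=; first by exists [::].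
rewrite IH; exists (rcons r (next (s :: r))); by [].
Qed.

Lemma hist_size {A : arena} next (s : vertex A) j : size (hist next s j) = j.+1.
Proof. elim: j => [|j IH] //=. by rewrite size_rcons IH. Qed.

Lemma hist_path {A : arena} {sigma : profile A} : is_profile sigma ->
  forall i, exists r, hist (profile_next sigma) (init A) i = init A :: r /\
     path (edge A) (init A) r.
Proof.
move=> Hprof; elim=> [|i [r [IH Hp]]]; first by exists [::].
exists (rcons r (profile_next sigma (init A :: r))); split.
  by rewrite /= IH.
rewrite rcons_path Hp /=.
exact: (Hprof (owner A (last (init A) r)) r Hp erefl).
Qed.

Theorem lemma2 (A : arena) (sigma : profile A) (gamma : incentive_profile A) :
  is_ISP sigma gamma ->
  forall p : player A, p != leader A ->
  forall v : vertex A, (exists n : nat, play sigma n = v) -> owner A v = p ->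
  Rbar_le (game_val p v)
          (Rbar_plus (incentive_value (gamma p) sigma) (raw_payoff sigma p)).
Proof.
move=> [Hprof [Hinc Hisp]] p Hp v [n Hn] Hown.
set nx := profile_next sigma.
have [pre [Hpre Hsz]] : exists pre, hist nx (init A) n = rcons pre v /\ size pre = n.
  have := hist_size nx (init A) n.
  move: Hn; rewrite /play /playv -/nx.
  case/lastP E: (hist nx (init A) n) => [|s x]; first by [].
  rewrite last_rcons size_rcons => -> [] <-. by exists s.
have [hr [Hhr Hphr]] := hist_path Hprof n.
rewrite -/nx Hpre in Hhr.
have Hlhr : last (init A) hr = v.
  have : last (init A) (init A :: hr) = v by rewrite -Hhr last_rcons.
  by [].
have Hcat : forall r2, pre ++ v :: r2 = init A :: (hr ++ r2).
  by move=> r2; rewrite -cat_rcons Hhr.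
have Hpcat : forall r2, path (edge A) (init A) (hr ++ r2) = path (edge A) v r2.
  by move=> r2; rewrite cat_path Hphr Hlhr.
have Hlcat : forall r2, last (init A) (hr ++ r2) = last v r2.
  by move=> r2; rewrite last_cat Hlhr.
apply (proj2 (sup_spec _)). move=> y [tau [Htau ->]].
set rho := fun h' => sigma (owner A (last v h')) (pre ++ h').
have Hrho : is_coalition_strategy_from v p rho.
  move=> rest Hpath Hq. rewrite /rho /= Hcat -(Hlcat rest).
  apply: Hprof; rewrite ?Hpcat ?Hlcat //.
apply Rbar_le_trans with (mean_payoff p (gp_next p tau rho v) v).
  apply (proj1 (inf_spec _)). exists rho; split; by [].
set sig' := fun h => if take n.+1 h == rcons pre v then tau (drop n h) else sigma p h.
have Hsig' : is_strategy_from (init A) p sig'.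
  move=> rest Hpath Hq. rewrite /sig'. case: ifP => E.
    move/eqP: E => E.
    have Er := cat_take_drop n.+1 (init A :: rest).
    rewrite E cat_rcons Hcat in Er. case: Er => Er.
    have Er2 : init A :: rest = pre ++ v :: drop n rest by rewrite Hcat Er.
    have Ed : drop n (init A :: rest) = v :: drop n rest by rewrite Er2 drop_size_cat.
    rewrite Ed. set r2 := drop n rest in Er *.
    rewrite -Er Hlcat. rewrite -Er Hlcat in Hq. rewrite -Er Hpcat in Hpath.
    exact: Htau.
  exact: Hprof.
have Hisp' := Hisp p Hp sig' Hsig'.
rewrite Rbar_plus_comm.
eapply Rbar_le_trans; [| exact Hisp'].
eapply Rbar_le_trans; [| apply Rbar_le_plus_nonneg].
2: { apply liminf_ge0 => k; apply avg_ge0 => i; by apply Hinc. }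
set dev := deviate sigma p sig'.
set nxd := profile_next dev.
set tn := gp_next p tau rho v.
have C0 : forall q h, take n.+1 h != rcons pre v -> dev q h = sigma q h.
  move=> q h Hh; rewrite /dev /deviate; case: eqP => [->|//].
  by rewrite /sig' (negbTE Hh).
have C1 : forall i, (i <= n)%N -> hist nxd (init A) i = hist nx (init A) i.
  elim=> [|i IH] Hi //=.
  rewrite IH; last by lia.
  rewrite /nxd /profile_next C0 //.
  rewrite take_oversize; last by rewrite hist_size; lia.
  apply/negP => /eqP E. have := congr1 size E. rewrite size_rcons hist_size Hsz. lia.
have C2 : forall j, hist nxd (init A) (n + j) = pre ++ hist tn v j.
  elim=> [|j IH].
    by rewrite addn0 C1 // /= Hpre cats1.
  rewrite addnS /= IH. have [r Hr] := hist_head tn v j. rewrite Hr rcons_cat.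
  congr (pre ++ rcons _ _).
  rewrite /nxd /tn /profile_next /gp_next last_cat /=.
  case: eqP => Ho.
    rewrite Ho /dev /deviate eqxx /sig' take_cat Hsz ltnNge leqnSn /= subSnn /= take0 cats1 eqxx.
    by rewrite drop_size_cat.
  rewrite /dev /deviate. case: eqP => //.
have C3 : forall j, playv nxd (init A) (n + j) = playv tn v j.
  move=> j; rewrite /playv C2. have [r Hr] := hist_head tn v j. by rewrite Hr last_cat.
rewrite /raw_payoff /mean_payoff -/nxd.
have [M HM] := @fin_bound _ (fun x : vertex A * vertex A => Q2R (reward A p x.1 x.2)).
apply (@liminf_shift _ _ n M).
  move=> i; exact: (HM (_, _)).
move=> i. by rewrite -!C3 addnS.
Qed.
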